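(* For any hypothesis class $\mathcal{H}$ with $|\mathcal{H}|<\infty$ and any integer $k\ge0$, \[ \mathrm{ELdim}(\mathcal{H},k)\le\max\Big\{t:\binom{t}{\le k+1}\le|\mathcal{H}|\Big\}. \]
   Context: Hypotheses are maps $\mathcal{X}\to\{-1,+1\}$; $\binom{t}{\le j}=\sum_{i=0}^{j}\binom{t}{i}$. Extended mistake tree w.r.t. $\mathcal{H}$: a finite full binary tree (possibly a single leaf) in which each internal node $v$ is labeled by $x_v\in\mathcal{X}$ and has two solid downward edges, to its left child (label $-1$) and right child (label $+1$), plus one dashed downward edge to one of its two children; each leaf is labeled by some $h\in\mathcal{H}$ with $h(x_v)$ equal to the direction label at every internal node $v$ on the root-to-leaf path. A root-to-leaf path chooses at each internal node one downward edge; its length is its number of edges. The tree is $(k,m)$-difficult if every root-to-leaf path using at most $k$ solid edges has length at least $m$. $\mathrm{ELdim}(\mathcal{H},k)$ is the supremum of $m$ such that a $(k,m)$-difficult extended mistake tree w.r.t. $\mathcal{H}$ exists. *)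

(* Defs.v *)
From mathcomp Require Import all_boot.
Set Implicit Arguments. Unset Strict Implicit. Unset Printing Implicit Defensive.

(* Hypothesis class H: a finite index type I with an injective labelling
   f : I -> (X -> bool); H = range f, |H| = #|I|.  Labels: true = +1, false = -1. *)

(* Extended mistake tree: leaves carry (the index of) a hypothesis; an internal
   node carries x_v, its left child (label -1), right child (label +1), and a bit
   d saying whether the dashed edge goes to the right (true) or left (false) child. *)
Inductive emtree (X I : Type) : Type :=
  | Leaf of I
  | Node of X & bool & emtree X I & emtree X I.
Arguments Leaf {X I} _.
Arguments Node {X I} _ _ _ _.

(* Well-formedness w.r.t. H: every leaf hypothesis h satisfies h(x_v) = direction
   label at each internal node v on its root-to-leaf path. [path] accumulates
   the constraints (x_v, direction) from the root. *)
Fixpoint emtree_wf_aux (X : Type) (I : Type) (f : I -> X -> bool)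
    (path : seq (X * bool)) (t : emtree X I) : Prop :=
  match t with
  | Leaf i => foldr (fun p P => f i p.1 = p.2 /\ P) True path
  | Node x _ l r => emtree_wf_aux f ((x, false) :: path) l /\
                    emtree_wf_aux f ((x, true) :: path) r
  end.

Definition emtree_wf (X I : Type) (f : I -> X -> bool) (t : emtree X I) : Prop :=
  emtree_wf_aux f [::] t.

Inductive edge := Dashed | SolidL | SolidR.

Definition is_solid (e : edge) : bool :=
  match e with Dashed => false | _ => true end.

Fixpoint is_rtl_path (X I : Type) (t : emtree X I) (p : seq edge) : bool :=
  match t, p with
  | Leaf _, [::] => true
  | Leaf _, _ :: _ => false
  | Node _ _ _ _, [::] => false
  | Node _ d l r, e :: p' =>
      match e with
      | Dashed => is_rtl_path (if d then r else l) p'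
      | SolidL => is_rtl_path l p'
      | SolidR => is_rtl_path r p'
      end
  end.

Definition difficult (X I : Type) (k m : nat) (t : emtree X I) : Prop :=
  forall p, is_rtl_path t p -> count is_solid p <= k -> m <= size p.

Definition binom_le (t j : nat) : nat := \sum_(i < j.+1) 'C(t, i).

(* Main.v *)
Require Import Defs.
From mathcomp Require Import all_boot.

Fixpoint leafset {X : Type} {I : finType} (t : emtree X I) : {set I} :=
  match t with
  | Leaf i => [set i]
  | Node _ _ l r => leafset l :|: leafset r
  end.

Lemma leafset_pos (X : Type) (I : finType) (t : emtree X I) : 0 < #|leafset t|.
Proof.
elim: t => [i|x d l IHl r IHr] /=; first by rewrite cards1.
apply: leq_trans IHl _; apply: subset_leq_card; exact: subsetUl.
Qed.

Lemma wf_leaf (X : Type) (I : finType) (f : I -> X -> bool) (t : emtree X I) i :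
  forall p, emtree_wf_aux f p t -> i \in leafset t ->
  foldr (fun p P => f i p.1 = p.2 /\ P) True p.
Proof.
elim: t => [j|x d l IHl r IHr] p /=.
  by move=> H; rewrite inE => /eqP ->.
move=> [Hl Hr]; rewrite inE => /orP [Hi|Hi].
  by have /= [_ ?] := IHl _ Hl Hi.
by have /= [_ ?] := IHr _ Hr Hi.
Qed.

Lemma binom_le0 j : binom_le 0 j = 1.
Proof.
rewrite /binom_le big_ord_recl bin0 big1 // => i _; by rewrite bin0n.
Qed.

Lemma binom_leS m j : binom_le m.+1 j.+1 = binom_le m j.+1 + binom_le m j.
Proof.
rewrite /binom_le big_ord_recl bin0.
rewrite (big_ord_recl j.+1) bin0.
under eq_bigr => i _ do rewrite /bump /= binS.
rewrite big_split /=.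
by rewrite addnA.
Qed.

Lemma main_aux (X : Type) (I : finType) (f : I -> X -> bool) (t : emtree X I) :
  forall p k m, emtree_wf_aux f p t -> difficult k m t ->
  binom_le m k.+1 <= #|leafset t|.
Proof.
elim: t => [i|x d l IHl r IHr] p k m.
  move=> _ Hd; have := Hd [::] erefl (leq0n _).
  rewrite leqn0 => /eqP ->; by rewrite binom_le0 /= cards1.
move=> [Hwl Hwr] Hd.
case: m Hd => [|m] Hd; first by rewrite binom_le0; exact: leafset_pos.
have disj : leafset l :&: leafset r = set0.
  apply/setP => i; rewrite !inE; apply/negP => /andP [Hl Hr].
  have /= [E1 _] := @wf_leaf _ _ f l i _ Hwl Hl.
  have /= [E2 _] := @wf_leaf _ _ f r i _ Hwr Hr.
  by rewrite E1 in E2.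
have card : #|leafset (Node x d l r)| = #|leafset l| + #|leafset r|.
  by rewrite /= -cardsUI disj cards0 addn0.
have Hc : difficult k m (if d then r else l).
  move=> q Hq Hk; have := Hd (Dashed :: q); rewrite /= Hq; by apply.
have Hso : forall k', k = k'.+1 -> difficult k' m l /\ difficult k' m r.
  move=> k' Ek; split => q Hq Hk.
    have := Hd (SolidL :: q); rewrite /= Hq Ek; by apply.
  have := Hd (SolidR :: q); rewrite /= Hq Ek; by apply.
rewrite card binom_leS.
have Ho : binom_le m k <= #|leafset (if d then l else r)|.
  case: k Hc Hso Hd => [|k'] Hc Hso Hd.
    by rewrite /binom_le big_ord_recl big_ord0 bin0 addn0; exact: leafset_pos.
  have [H1 H2] := Hso k' erefl.
  clear card; case: d Hc {Hso} Hd => Hc Hd.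
    exact: IHl Hwl H1.
  exact: IHr Hwr H2.
clear card; case: d Hc Ho Hd => Hc Ho Hd.
  rewrite addnC; apply: leq_add => //; exact: IHr Hwr Hc.
apply: leq_add => //; exact: IHl Hwl Hc.
Qed.

Theorem mainTheorem8 (X : Type) (I : finType) (f : I -> X -> bool)
    (f_inj : injective f) (k : nat) :
  forall (m : nat) (T : emtree X I),
    emtree_wf f T -> difficult k m T ->
    exists t : nat, binom_le t k.+1 <= #|I| /\ m <= t.
Proof.
move=> m T Hw Hd; exists m; split => //.
apply: leq_trans (@main_aux _ _ f T [::] k m Hw Hd) _; exact: max_card.
Qed.
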